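(* Let $\mathbb{M}$ be $(1+3)$-dimensional Minkowski spacetime and $\overline{\mathcal{P}}_+^\uparrow=\mathbb{R}^4\rtimes SL(2,\mathbb{C})$ the double cover of the proper orthochronous Poincaré group, with elements $(a,A)$, and let $\Lambda:SL(2,\mathbb{C})\to SO^+(1,3)$ be the covering homomorphism. Let $\mathcal{H}$ be a Hilbert space, $\mathcal{D}\subset\mathcal{H}$ dense, $U$ a unitary representation of $\overline{\mathcal{P}}_+^\uparrow$ on $\mathcal{H}$, and $S:SL(2,\mathbb{C})\to GL(\mathbb{C}^n)$ a multiplicity-free finite-dimensional representation with no trivial sub-representations. Let $\hat\psi=\{\hat\psi_\alpha:\mathbb{M}\to\mathcal{L}(\mathcal{D},\mathcal{H})\}_{\alpha=1}^n$. Suppose (1) $U(a,A)\mathcal{D}\subset\mathcal{D}$ and $U(a,A)^\dagger\mathcal{D}\subset\mathcal{D}$ for all $(a,A)\in\overline{\mathcal{P}}_+^\uparrow$; (2) $\hat\psi_\alpha(x)\mathcal{D}\subset\mathcal{D}$ and $\hat\psi_\alpha(x)^\dagger\mathcal{D}\subset\mathcal{D}$ for all $x\in\mathbb{M}$ and all $\alpha$; (3) for all $(a,A)\in\overline{\mathcal{P}}_+^\uparrow$, $x\in\mathbb{M}$, $\alpha\in\{1,\dots,n\}$, on $\mathcal{D}$: $U(a,A)\hat\psi_\alpha(x)U(a,A)^\dagger=\sum_{\beta=1}^nS[A^{-1}]_{\alpha\beta}\hat\psi_\beta(\Lambda(A)x+a)$; (4) there exists a nonzero vector $\ket\Omega\in\mathcal{D}$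 with $U(a,A)\ket\Omega=\ket\Omega$ for all $(a,A)\in\overline{\mathcal{P}}_+^\uparrow$. Then $\hat\psi_\alpha(x)\ket\Omega=\hat\psi_\alpha(x)^\dagger\ket\Omega=0$ for all $x\in\mathbb{M}$ and all $\alpha\in\{1,\dots,n\}$.
   Context: $\mathcal{L}(\mathcal{D},\mathcal{H})$ denotes the linear maps from $\mathcal{D}$ into $\mathcal{H}$. No continuity of $U$ is assumed. A finite-dimensional representation is multiplicity-free if, in its decomposition into irreducible sub-representations, no irreducible representation occurs more than once; ''no trivial sub-representations'' means the one-dimensional trivial representation does not occur. *)

(* Defs.v *)
From HB Require Import structures.
From mathcomp Require Import all_boot all_order all_algebra.
From mathcomp Require Import reals.
From mathcomp Require Import complex.
Set Implicit Arguments. Unset Strict Implicit. Unset Printing Implicit Defensive.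
Import Order.TTheory GRing.Theory Num.Theory.
Local Open Scope ring_scope.
Local Open Scope complex_scope.

Section Defs.
Variable R : realType.
Local Notation C := (R[i]).

(* Physics convention: ip u v = <u|v>, antilinear in u, linear in v. *)
Section Hilbert.
Variable V : lmodType C.
Variable ip : V -> V -> C.

Definition dist2 (u v : V) : R := complex.Re (ip (u - v) (u - v)).

Definition is_cauchy (u : nat -> V) : Prop :=
  forall eps : R, 0 < eps -> exists N : nat,
    forall m k : nat, (N <= m)%N -> (N <= k)%N -> dist2 (u m) (u k) < eps.

Definition converges_to (u : nat -> V) (l : V) : Prop :=
  forall eps : R, 0 < eps -> exists N : nat,
    forall m : nat, (N <= m)%N -> dist2 (u m) l < eps.

Definition hilbert_ip : Prop :=
  [/\ (forall u v w : V, forall c : C, ip u (c *: v + w) = c * ip u v + ip u w),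
      (forall u v : V, ip v u = conjc (ip u v)),
      (forall u : V, 0 <= ip u u),
      (forall u : V, ip u u = 0 -> u = 0)
    & (forall u : nat -> V, is_cauchy u -> exists l, converges_to u l)].

Definition is_subspace (D : V -> Prop) : Prop :=
  D 0 /\ forall (c : C) (u v : V), D u -> D v -> D (c *: u + v).

Definition is_dense (D : V -> Prop) : Prop :=
  forall (v : V) (eps : R), 0 < eps -> exists d, D d /\ dist2 v d < eps.

(* T : V -> V, regarded as an element of L(Dom, V) *)
Definition linear_on (Dom : V -> Prop) (T : V -> V) : Prop :=
  forall (c : C) (u v : V), Dom u -> Dom v -> T (c *: u + v) = c *: T u + T v.

(* u = T^dagger w, where T has domain Dom:  <u|v> = <w|T v> for all v in Dom *)
Definition adjoint_at (Dom : V -> Prop) (T : V -> V) (w u : V) : Prop :=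
  forall v : V, Dom v -> ip u v = ip w (T v).

(* D is contained in the domain of T^dagger and T^dagger D is contained in D *)
Definition adjoint_preserves (Dom : V -> Prop) (T : V -> V) (D : V -> Prop) : Prop :=
  forall w : V, D w -> exists u : V, D u /\ adjoint_at Dom T w u.

Definition unitary_op (T : V -> V) : Prop :=
  [/\ (forall (c : C) (u v : V), T (c *: u + v) = c *: T u + T v),
      (forall u v : V, ip (T u) (T v) = ip u v)
    & (forall w : V, exists u, T u = w)].
End Hilbert.

(* points of Minkowski space: x = (x^0, x^1, x^2, x^3) as a row vector *)
Definition mink := 'rV[R]_4.

Definition SL2 (A : 'M[C]_2) : Prop := \det A = 1.

(* x |-> x^mu sigma_mu *)
Definition herm_of (x : mink) : 'M[C]_2 :=
  \matrix_(i < 2, j < 2)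
    (if (val i == 0)%N && (val j == 0)%N then (x 0 0 + x 0 3)%:C
     else if (val i == 0)%N then (x 0 1) -i* (x 0 2)
     else if (val j == 0)%N then (x 0 1) +i* (x 0 2)
     else (x 0 0 - x 0 3)%:C).

(* inverse of herm_of on Hermitian matrices *)
Definition vec_of_herm (M : 'M[C]_2) : mink :=
  \row_(k < 4)
    (if (val k == 0)%N then complex.Re (M 0 0 + M 1 1) / 2
     else if (val k == 1)%N then complex.Re (M 1 0)
     else if (val k == 2)%N then complex.Im (M 1 0)
     else complex.Re (M 0 0 - M 1 1) / 2).

Definition conjT (A : 'M[C]_2) : 'M[C]_2 := (map_mx (@conjc R) A)^T.

(* Lambda(A) x, defined by  Lambda(A)x . sigma = A (x . sigma) A^*  *)
Definition Lam (A : 'M[C]_2) (x : mink) : mink :=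
  vec_of_herm (A *m herm_of x *m conjT A).

(* Subspaces of C^n are row spaces of n x n matrices (mxalgebra); a column
   vector v is acted on by S A as S A *m v, i.e. a row vector v^T by (S A)^T. *)
Section Rep.
Variable n : nat.
Variable S : 'M[C]_2 -> 'M[C]_n.

Definition is_rep : Prop :=
  [/\ (forall A, SL2 A -> S A \in unitmx),
      S 1%:M = 1%:M
    & (forall A B, SL2 A -> SL2 B -> S (A *m B) = S A *m S B)].

Definition invariant (W : 'M[C]_n) : Prop :=
  forall A, SL2 A -> (W *m (S A)^T <= W)%MS.

Definition irreducible_sub (W : 'M[C]_n) : Prop :=
  [/\ invariant W, W != 0
    & forall W' : 'M[C]_n, invariant W' -> (W' <= W)%MS ->
        W' == 0 \/ (W' == W)%MS].

(* the sub-representations on W1 and W2 are isomorphic *)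
Definition iso_sub (W1 W2 : 'M[C]_n) : Prop :=
  exists f : 'M[C]_n,
    [/\ (W1 *m f == W2)%MS, \rank (W1 *m f) = \rank W1
      & forall A, SL2 A -> W1 *m (S A)^T *m f = W1 *m f *m (S A)^T].

Definition trivial_sub (W : 'M[C]_n) : Prop :=
  \rank W = 1%N /\ forall A, SL2 A -> W *m (S A)^T = W.

(* S is multiplicity-free with no trivial sub-representation: C^n decomposes
   as a direct sum of irreducible sub-representations, pairwise
   non-isomorphic, none of them trivial *)
Definition multfree_notrivial : Prop :=
  exists (k : nat) (W : 'I_k -> 'M[C]_n),
    [/\ mxdirect (\sum_(i < k) W i),
        (\sum_(i < k) W i == 1%:M)%MS,
        (forall i, irreducible_sub (W i)),
        (forall i j, i != j -> ~ iso_sub (W i) (W j))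
      & (forall i, ~ trivial_sub (W i))].
End Rep.
End Defs.

(* Main.v *)
Require Import Defs.
From HB Require Import structures.
From mathcomp Require Import all_boot all_order all_algebra.
From mathcomp Require Import reals.
From mathcomp Require Import complex.
From mathcomp Require Import ring.
Set Implicit Arguments. Unset Strict Implicit. Unset Printing Implicit Defensive.
Import Order.TTheory GRing.Theory Num.Theory.
Local Open Scope ring_scope.

Section Mx.
Variable C : numClosedFieldType.
Definition ct m p (X : 'M[C]_(m,p)) : 'M[C]_(p,m) := (map_mx Num.conj X)^T.

Lemma ctE m p (X : 'M[C]_(m,p)) i j : ct X i j = (X j i)^*.
Proof. by rewrite /ct !mxE. Qed.

Lemma ctM m p q (X : 'M[C]_(m,p)) (Y : 'M[C]_(p,q)) : ct (X *m Y) = ct Y *m ct X.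
Proof. by rewrite /ct map_mxM trmx_mul. Qed.
Lemma ctD m p (X Y : 'M[C]_(m,p)) : ct (X + Y) = ct X + ct Y.
Proof. by rewrite /ct map_mxD linearD. Qed.
Lemma ctZ m p (s : C) (X : 'M[C]_(m,p)) : ct (s *: X) = s^* *: ct X.
Proof. by apply/matrixP=> i j; rewrite !mxE rmorphM. Qed.
Lemma ctK m p (X : 'M[C]_(m,p)) : ct (ct X) = X.
Proof. by apply/matrixP=> i j; rewrite !mxE conjCK. Qed.
Lemma ct1 n : ct (1%:M : 'M[C]_n) = 1%:M.
Proof. by rewrite /ct map_mx1 trmx1. Qed.
Lemma ct0 m p : ct (0 : 'M[C]_(m,p)) = 0.
Proof. by rewrite /ct map_mx0 trmx0. Qed.
Lemma ctN m p (X : 'M[C]_(m,p)) : ct (- X) = - ct X.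
Proof. by rewrite /ct map_mxN linearN. Qed.
Lemma ctX n (X : 'M[C]_n) k : ct (X ^+ k) = (ct X) ^+ k.
Proof.
elim: k => [|k IH]; first by rewrite !expr0 ct1.
by rewrite exprS exprSr [X * _]/(X *m _) ctM IH.
Qed.

Definition psd n (H : 'M[C]_n) := forall a : 'rV[C]_n, 0 <= (a *m H *m ct a) 0 0.

Section Form.
Variables (n : nat) (H : 'M[C]_n).
Hypothesis herm : ct H = H.
Definition fH (u v : 'rV[C]_n) := (u *m H *m ct v) 0 0.
Lemma fHDl u v w : fH (u + v) w = fH u w + fH v w.
Proof. by rewrite /fH !mulmxDl mxE. Qed.
Lemma fHDr u v w : fH u (v + w) = fH u v + fH u w.
Proof. by rewrite /fH ctD !mulmxDr mxE. Qed.
Lemma fHZl s u v : fH (s *: u) v = s * fH u v.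
Proof. by rewrite /fH -!scalemxAl mxE. Qed.
Lemma fHZr s u v : fH u (s *: v) = s^* * fH u v.
Proof. by rewrite /fH ctZ -!scalemxAr mxE. Qed.
Lemma fHC u v : fH v u = (fH u v)^*.
Proof.
have E : (fH u v)^* = (ct (u *m H *m ct v)) 0 0.
  rewrite /fH [in RHS]/ct !mxE //.
rewrite E !ctM ctK herm mulmxA //.
Qed.

Lemma psd_vec (pH : psd H) x : fH x x = 0 -> x *m H = 0.
Proof.
move=> xx.
suff fy : forall y, fH x y = 0.
  apply/rowP => j; have := fy (delta_mx 0 j).
  rewrite /fH /ct. 
  have -> : (map_mx Num.conj (delta_mx 0 j : 'rV[C]_n))^T = delta_mx j 0.
    by apply/matrixP => a b; rewrite !mxE rmorph_nat andbC.
  by rewrite -colE !mxE.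
move=> y; set a := fH x y; set b := fH y y.
have b0 : 0 <= b by apply: pH.
have b1 : 0 < 1 + b by rewrite ltr_wpDr.
set e := (1 + b)^-1.
have e0 : 0 < e by rewrite invr_gt0.
have ec : e^* = e by rewrite geC0_conj // ltW.
have := pH (x + (- (e * a)) *: y).
rewrite -/(fH _ _) fHDl !fHDr !fHZl !fHZr xx -/a -/b fHC -/a.
move=> H0.
have H1 : e * (a * a^*) * (2 - e * b) <= 0.
  rewrite -oppr_ge0; move: H0; congr (_ <= _).
  rewrite !(rmorphN (@Num.conj C)) !(rmorphM (@Num.conj C)) /= ec; ring.
have eb : e * b < 2.
  apply: (le_lt_trans (y := 1)); last by rewrite ltr1n.
  by rewrite /e ler_pdivrMl // mulr1 -subr_ge0 addrK ler01.
have H2 : 0 <= e * (a * a^*) * (2 - e * b).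
  apply: mulr_ge0; [apply: mulr_ge0; [exact: ltW | exact: mul_conjC_ge0] | rewrite subr_ge0; exact: ltW].
have : e * (a * a^*) * (2 - e * b) == 0 by rewrite eq_le H1 H2.
rewrite !mulf_eq0 (gt_eqF e0) subr_eq0 (gt_eqF eb) orbF /=.
by rewrite conjC_eq0 orbb => /eqP.
Qed.

Lemma psd_mx (pH : psd H) m (X : 'M[C]_(m, n)) : X *m H *m ct X = 0 -> X *m H = 0.
Proof.
move=> XX; apply/row_matrixP => i; rewrite row_mul row0; apply: psd_vec => //.
rewrite /fH rowE ctM !mulmxA -(mulmxA _ X) -(mulmxA _ (X *m H)) XX.
by rewrite mulmx0 mul0mx mxE.
Qed.
End Form.

Lemma unip_fix n (H P : 'M[C]_n) k : ct H = H -> psd H ->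
  P *m H *m ct P = H -> (P - 1) ^+ k = 0 -> P *m H = H.
Proof.
move=> herm pH PHP; set N := P - 1 => Nk.
have PN : P = N + 1 by rewrite /N subrK.
clearbody N.
have eqN : N *m H + H *m ct N + N *m H *m ct N = 0.
  move: PHP; rewrite PN ctD ct1 mulmxDl mul1mx !mulmxDr !mulmx1 => /eqP.
  rewrite -subr_eq0 => /eqP <-; rewrite [_ + (_ + H)]addrA addrK mulmxDl.
  by rewrite [LHS]addrC [LHS]addrA [LHS]addrAC.
suff : forall d i, (k <= i + d)%N -> N ^+ i.+1 *m H = 0.
  move=> /(_ k 0%N); rewrite add0n leqnn expr1 => /(_ isT) NH0.
  by rewrite PN mulmxDl NH0 add0r mul1mx.
elim=> [|d IH] i.
  rewrite addn0 => ki; rewrite -(subnK (leqW ki)) exprD Nk mulr0 mul0mx //.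
rewrite addnS -addSn => /IH hi.
have hY : H *m ct (N ^+ i.+2) = 0 by rewrite -[H in H *m _]herm -ctM hi ct0.
set X := N ^+ i.+1.
have eY : ct (N ^+ i.+2) = ct N *m ct X by rewrite -ctM exprSr.
apply: (psd_mx herm pH).
have := congr1 (fun Z => N^+i *m Z *m ct X) eqN.
rewrite /= mulmx0 mul0mx !mulmxDr !mulmxDl -!mulmxA -eY hY !mulmx0 !addr0.
by rewrite /X exprSr -!mulmxA.
Qed.
Lemma eigen_conj n (A D : 'M[C]_n) mu : D \in unitmx ->
  eigenvalue (D *m A *m invmx D) mu -> eigenvalue A mu.
Proof.
move=> uD /eigenvalueP [v vE v0]; apply/eigenvalueP; exists (v *m D).
  by rewrite -mulmxA -[D *m A](mulmxKV uD) mulmxA vE scalemxAl.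
apply: contra v0 => /eqP vD0; apply/eqP.
by rewrite -(mulmxK uD v) vD0 mul0mx.
Qed.

Lemma eigen_pow n (A : 'M[C]_n) mu m : eigenvalue A mu -> eigenvalue (A ^+ m) (mu ^+ m).
Proof.
move=> /eigenvalueP [v vE v0]; apply/eigenvalueP; exists v => //.
elim: m => [|m IH]; first by rewrite !expr0 scale1r mulmx1.
by rewrite exprSr [_ * A]/(_ *m A) mulmxA IH -scalemxAl vE scalerA -exprSr.
Qed.

Lemma prod_XsubC_dvd (rs : seq C) L : all (fun z => z ^+ L == 1) rs ->
  \prod_(z <- rs) ('X - z%:P) %| ('X^L - 1) ^+ (size rs).
Proof.
elim: rs => [|z rs IH] /=; first by rewrite big_nil dvd1p.
case/andP => zL /IH h; rewrite big_cons exprS dvdp_mul //.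
by rewrite dvdp_XsubCl /root !hornerE subr_eq0.
Qed.

Lemma unip_of_conj n (P : C -> 'M[C]_n) :
  (forall s t, P (s + t) = P s *m P t) -> P 0 = 1%:M ->
  (forall t (m : nat), (0 < m)%N ->
     exists2 D, D \in unitmx & P (m%:R * t) = D *m P t *m invmx D) ->
  forall t, exists k, (P t - 1) ^+ k = 0.
Proof.
case: n P => [|n] P Padd P0 Pc t.
  by exists 0%N; apply/matrixP => [[]].
have Pm : forall (m : nat) s, P (m%:R * s) = P s ^+ m.
  elim=> [|m IH] s; first by rewrite mul0r P0 expr0.
  by rewrite mulrSr mulrDl mul1r Padd IH exprSr.
have Pu : forall s, P s \in unitmx.
  by move=> s; have [] := @mulmx1_unit _ _ (P s) (P (- s)); rewrite // -Padd subrr P0.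
have ru : forall s mu, eigenvalue (P s) mu -> mu ^+ (n.+1)`! = 1.
  move=> s mu emu.
  have em : forall m, (0 < m)%N -> root (char_poly (P s)) (mu ^+ m).
    move=> m m0; rewrite -eigenvalue_root_char.
    have [D uD PD] := Pc s m m0.
    by apply: (eigen_conj uD); rewrite -PD Pm; apply: eigen_pow.
  have mu0 : mu != 0.
    apply: contraTneq emu => ->; apply/eigenvalueP => [[v]].
    by rewrite scale0r => vP0; rewrite -(mulmxK (Pu s) v) vP0 mul0mx eqxx.
  set sq := [seq mu ^+ i.+1 | i <- iota 0 n.+2].
  have : ~~ uniq sq.
    apply/negP => usq.
    have ar : all (root (char_poly (P s))) sq.
      by apply/allP => z /mapP [i _ ->]; apply: em.
    have := max_poly_roots (monic_neq0 (char_poly_monic (P s))) ar usq.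
    by rewrite size_char_poly size_map size_iota ltnn.
  case/(uniqPn 0) => i [j [ij]]; rewrite size_map size_iota => jn.
  rewrite !(nth_map 0%N) ?size_iota ?(ltn_trans ij) // !nth_iota ?(ltn_trans ij) // !add0n.
  move=> eij.
  have e1 : mu ^+ (j - i) = 1.
    apply: (mulfI (expf_neq0 i.+1 mu0)); rewrite -exprD mulr1 eij.
    by rewrite addSn subnKC // ltnW.
  have : (j - i %| (n.+1)`!)%N by apply: dvdn_fact; rewrite subn_gt0 ij /= (leq_trans (leq_subr _ _)) // -ltnS.
  by case/dvdnP => q ->; rewrite mulnC exprM e1 expr1n.
set L := (n.+1)`!.
have L0 : (L%:R : C) != 0 by rewrite pnatr_eq0 -lt0n fact_gt0.
set Q := P (t / L%:R).
have QL : Q ^+ L = P t by rewrite /Q -Pm mulrC divfK.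
have [rs hrs] := closed_field_poly_normal (char_poly Q).
move: hrs; rewrite (monicP (char_poly_monic Q)) scale1r => hrs.
have := prod_XsubC_dvd (L := L) (rs := rs).
rewrite -hrs; case/(_ _)/dvdpP.
  apply/allP => z zr; apply/eqP; apply: (ru (t / L%:R)).
  by rewrite eigenvalue_root_char hrs root_prod_XsubC.
move=> q eq; exists (size rs).
have := congr1 (horner_mx Q) eq.
rewrite rmorphM /= Cayley_Hamilton mulr0 rmorphXn rmorphB /= rmorphXn /= horner_mx_X rmorph1.
by rewrite QL.
Qed.
End Mx.

Section SL.
Variable R : realType.
Local Notation C := (R[i]).

Definition mk2 (a b c d : C) : 'M[C]_2 :=
  \matrix_(i < 2, j < 2) if (val i == 0)%N then (if (val j == 0)%N then a else b)
                         else (if (val j == 0)%N then c else d).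

Lemma mk2_eta (A : 'M[C]_2) : A = mk2 (A 0 0) (A 0 1) (A 1 0) (A 1 1).
Proof.
apply/matrixP => i j; rewrite mxE.
by case: i => [[|[|//]]] Hi; case: j => [[|[|//]]] Hj; congr (A _ _); apply: val_inj.
Qed.

Lemma mk2_mul a b c d a' b' c' d' :
  mk2 a b c d *m mk2 a' b' c' d' =
  mk2 (a * a' + b * c') (a * b' + b * d') (c * a' + d * c') (c * b' + d * d').
Proof.
apply/matrixP => i j; rewrite !mxE !big_ord_recl big_ord0 !mxE /= addr0.
by case: i => [[|[|//]]] Hi; case: j => [[|[|//]]] Hj.
Qed.

Lemma det_mk2 a b c d : \det (mk2 a b c d) = a * d - b * c.
Proof.
rewrite (expand_det_row _ 0) !big_ord_recl big_ord0 addr0 /cofactor !det_mx11 !mxE /=.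
rewrite /bump /=.
rewrite !expr0 ?expr1 /=; ring.
Qed.

Lemma mk2_1 : mk2 1 0 0 1 = 1%:M.
Proof.
by apply/matrixP => i j; rewrite !mxE; case: i => [[|[|//]]] Hi; case: j => [[|[|//]]] Hj.
Qed.

Definition uu (t : C) := mk2 1 t 0 1.
Definition ll (t : C) := mk2 1 0 t 1.
Definition dg (c : C) := mk2 c 0 0 c^-1.

Lemma SL2_mk2 a b c d : SL2 (mk2 a b c d) <-> a * d - b * c = 1.
Proof. by rewrite /SL2 det_mk2. Qed.

Lemma SL2_uu t : SL2 (uu t). Proof. by apply/SL2_mk2; ring. Qed.
Lemma SL2_ll t : SL2 (ll t). Proof. by apply/SL2_mk2; ring. Qed.
Lemma SL2_dg c : c != 0 -> SL2 (dg c).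
Proof. by move=> c0; apply/SL2_mk2; rewrite mulr0 subr0 divff. Qed.
Lemma SL2_mul (A B : 'M[C]_2) : SL2 A -> SL2 B -> SL2 (A *m B).
Proof. by rewrite /SL2 det_mulmx => -> ->; rewrite mulr1. Qed.

Lemma uu_add s t : uu (s + t) = uu s *m uu t.
Proof. by rewrite /uu mk2_mul; congr mk2; ring. Qed.
Lemma ll_add s t : ll (s + t) = ll s *m ll t.
Proof. by rewrite /ll mk2_mul; congr mk2; ring. Qed.
Lemma uu0 : uu 0 = 1%:M. Proof. exact: mk2_1. Qed.
Lemma ll0 : ll 0 = 1%:M. Proof. exact: mk2_1. Qed.

Lemma dg_uu c t : c != 0 -> dg c *m uu t = uu (c ^+ 2 * t) *m dg c.
Proof. by move=> c0; rewrite /dg /uu !mk2_mul; congr mk2; field. Qed.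
Lemma dg_ll c t : c != 0 -> dg c^-1 *m ll t = ll (c ^+ 2 * t) *m dg c^-1.
Proof. by move=> c0; rewrite /dg /ll !mk2_mul; congr mk2; field. Qed.

Lemma SL2_decomp a b c d : a * d - b * c = 1 -> c != 0 ->
  mk2 a b c d = uu ((a - 1) / c) *m ll c *m uu ((d - 1) / c).
Proof.
move=> h c0.
have h' : a * d - 1 = b * c by rewrite -h; ring.
have hb : b = (a * d - 1) / c by rewrite h' mulfK.
by rewrite /uu /ll !mk2_mul hb; congr mk2; field.
Qed.

Lemma SL2_decomp0 a b c d : mk2 a b c d = ll 1 *m mk2 a b (c - a) (d - b).
Proof. by rewrite /ll mk2_mul; congr mk2; ring. Qed.

Section Rep.
Variables (n : nat) (S : 'M[C]_2 -> 'M[C]_n).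
Hypothesis rS : is_rep S.


Lemma fixH (H : 'M[C]_n) : ct H = H -> psd H ->
  (forall A, SL2 A -> S A *m H *m ct (S A) = H) ->
  forall A, SL2 A -> S A *m H = H.
Proof.
case: rS => Su S1 SM herm pH inv.
have key : forall (P : C -> 'M[C]_2), (forall t, SL2 (P t)) ->
    (forall s t, P (s + t) = P s *m P t) -> P 0 = 1%:M ->
    (forall t (m : nat), (0 < m)%N -> exists2 g, SL2 g & g *m P t = P (m%:R * t) *m g) ->
    forall t, S (P t) *m H = H.
  move=> P PS Padd P0 Pc t.
  have [k Hk] : exists k, (S (P t) - 1) ^+ k = 0.
    apply: (@unip_of_conj _ _ (fun t => S (P t))).
    - by move=> s r; rewrite Padd SM.
    - by rewrite P0 S1.
    - move=> r m m0; have [g gS gP] := Pc r m m0.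
      exists (S g); first exact: Su.
      by rewrite -SM // gP SM // mulmxK // Su.
  exact: (unip_fix herm pH (inv _ (PS t)) Hk).
have hu : forall t, S (uu t) *m H = H.
  apply: key; [exact: SL2_uu | exact: uu_add | exact: uu0 |].
  move=> t m m0; set c := sqrtC (m%:R : C).
  have c0 : c != 0 by rewrite sqrtC_eq0 pnatr_eq0 -lt0n.
  exists (dg c); first exact: SL2_dg.
  by rewrite dg_uu // sqrtCK.
have hl : forall t, S (ll t) *m H = H.
  apply: key; [exact: SL2_ll | exact: ll_add | exact: ll0 |].
  move=> t m m0; set c := sqrtC (m%:R : C).
  have c0 : c != 0 by rewrite sqrtC_eq0 pnatr_eq0 -lt0n.
  exists (dg c^-1); first by apply: SL2_dg; rewrite invr_eq0.
  by rewrite dg_ll // sqrtCK.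
have hc : forall a b c d, a * d - b * c = 1 -> c != 0 -> S (mk2 a b c d) *m H = H.
  move=> a b c d h c0; rewrite SL2_decomp //.
  rewrite SM; [|exact: SL2_mul (SL2_uu _) (SL2_ll _) | exact: SL2_uu].
  rewrite SM; [|exact: SL2_uu|exact: SL2_ll].
  by rewrite -!mulmxA hu hl hu.
move=> A; rewrite [A]mk2_eta; set a := A 0 0; set b := A 0 1; set c := A 1 0; set d := A 1 1.
move/SL2_mk2 => h.
have [c0|c0] := eqVneq c 0; last exact: hc.
rewrite SL2_decomp0 SM; [| exact: SL2_ll | by apply/SL2_mk2; rewrite -h; ring].
rewrite -mulmxA hc ?hl //; first by rewrite -h; ring.
rewrite c0 sub0r oppr_eq0; apply/eqP => a0; move: h.
by rewrite a0 c0 !mul0r mulr0 subrr => /eqP; rewrite eq_sym oner_eq0.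
Qed.
Lemma fixed_row_zero (r : 'rV[C]_n) : multfree_notrivial S ->
  (forall A, SL2 A -> r *m (S A)^T = r) -> r = 0.
Proof.
case=> k [W [dir sum1 irr niso ntriv]] fixr.
have rsub : (r <= \sum_(i < k) W i)%MS.
  by apply: submx_trans (submx1 r) _; case/andP: sum1.
case/sub_sumsmxP: rsub => u ru.
set ri := fun i => u i *m W i.
have riW : forall i, (ri i <= W i)%MS by move=> i; apply: submxMl.
have WS : forall j A, SL2 A -> (W j *m (S A)^T <= W j)%MS.
  by move=> j A sA; case: (irr j) => inv _ _; apply: inv.
have rifix : forall i A, SL2 A -> ri i *m (S A)^T = ri i.
  move=> i A sA; apply/eqP; rewrite -subr_eq0; apply/eqP.
  set e := fun j => ri j *m (S A)^T - ri j.
  have ej : forall j, (e j <= W j)%MS.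
    move=> j; apply: addmx_sub; last by rewrite eqmx_opp.
    by rewrite /ri -mulmxA; apply: submx_trans (submxMl _ _) (WS j A sA).
  have esum : \sum_j e j = 0.
    by rewrite /e sumrB -mulmx_suml -/(ri _) -ru fixr // subrr.
  have ei : e i = - \sum_(j | j != i) e j.
    by move: esum; rewrite (bigD1 i) //= => /eqP; rewrite addr_eq0 => /eqP.
  move/mxdirect_sumsP: (dir) => /(_ i isT).
  move=> /eqP; rewrite -submx0 => /(submx_trans _) h; apply/eqP; rewrite -submx0.
  apply: h; rewrite -/(e i) sub_capmx ej /= ei eqmx_opp.
  by apply: summx_sub => j ji; apply: (sumsmx_sup j) => //.
apply/eqP; apply/negPn/negP => rn0.
case: (pickP (fun i => ri i != 0)) => [i ri0 | all0]; last first.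
  move/negP: rn0; apply; rewrite ru big1 // => j _.
  by have := all0 j; rewrite /= => /negbFE /eqP.
set W' : 'M[C]_n := \matrix_(j < n) ri i.
have W'S : forall A, SL2 A -> W' *m (S A)^T = W'.
  by move=> A sA; apply/row_matrixP => j; rewrite row_mul rowK rifix.
have W'W : (W' <= W i)%MS by apply/row_subP => j; rewrite rowK.
have W'r : (W' <= ri i)%MS by apply/row_subP => j; rewrite rowK.
have W'0 : W' != 0.
  apply: contra ri0 => /eqP W0; apply/eqP/rowP => j.
  by have := congr1 (fun M : 'M[C]_n => M j j) W0; rewrite !mxE.
have inv' : Defs.invariant S W' by move=> A sA; rewrite W'S.
case: (irr i) => _ _ /(_ W' inv' W'W) [/eqP W'0'|W'eq].
  by rewrite W'0' eqxx in W'0.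
apply: (ntriv i); split.
  rewrite -(eqmx_rank W'eq); apply/eqP; rewrite eqn_leq lt0n mxrank_eq0 W'0 andbT.
  by apply: leq_trans (mxrankS W'r) (rank_leq_row _).
move=> A sA; apply/row_matrixP => j; rewrite row_mul.
have : (row j (W i) <= ri i)%MS.
  apply: submx_trans (row_sub j (W i)) _; apply: submx_trans W'r.
  by case/andP: W'eq.
by case/sub_rVP => a ->; rewrite -scalemxAl rifix.
Qed.
Lemma SL2_inv (A : 'M[C]_2) : SL2 A -> SL2 (invmx A).
Proof. by rewrite /SL2 det_inv => ->; rewrite invr1. Qed.

Lemma core (H : 'M[C]_n) : multfree_notrivial S -> ct H = H -> psd H ->
  (forall A, SL2 A -> S (invmx A) *m H *m ct (S (invmx A)) = H) -> H = 0.
Proof.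
move=> mf herm pH inv.
have inv' : forall A, SL2 A -> S A *m H *m ct (S A) = H.
  move=> A sA; have := inv _ (SL2_inv sA); rewrite invmxK //.
have fx := fixH herm pH inv'.
rewrite -[H]trmxK; apply/eqP; rewrite trmx_eq0; apply/eqP/row_matrixP => j.
rewrite row0; apply: fixed_row_zero mf _ => A sA.
by rewrite -row_mul -trmx_mul fx.
Qed.
End Rep.
End SL.

Section Hilb.
Variable R : realType.
Local Notation C := (R[i]).
Variables (V : lmodType C) (ip : V -> V -> C).
Hypothesis hH : hilbert_ip ip.

Lemma conjcE (x : C) : conjc x = x^*. Proof. by []. Qed.

Lemma ipC u v : ip v u = (ip u v)^*.
Proof. by case: hH => _ h _ _ _; rewrite h. Qed.

Lemma ip0r u : ip u 0 = 0.
Proof.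
case: hH => lin _ _ _ _; have h := lin u 0 0 1; rewrite scale1r addr0 mul1r in h.
by have := congr1 (fun x => x - ip u 0) h; rewrite subrr addrK => ->.
Qed.

Lemma ipDr u v w : ip u (v + w) = ip u v + ip u w.
Proof. by case: hH => lin _ _ _ _; have := lin u v w 1; rewrite scale1r mul1r. Qed.

Lemma ipZr u c v : ip u (c *: v) = c * ip u v.
Proof. by case: hH => lin _ _ _ _; have := lin u v 0 c; rewrite addr0 ip0r addr0. Qed.

Lemma ipDl u v w : ip (u + v) w = ip u w + ip v w.
Proof. by rewrite ipC ipDr rmorphD /= -!ipC. Qed.

Lemma ipZl c u v : ip (c *: u) v = c^* * ip u v.
Proof. by rewrite ipC ipZr rmorphM /= -!ipC. Qed.

Lemma ip0l u : ip 0 u = 0.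
Proof. by rewrite ipC ip0r rmorph0. Qed.

Lemma ipNl u v : ip (- u) v = - ip u v.
Proof. by rewrite -scaleN1r ipZl rmorphN rmorph1 mulN1r. Qed.

Lemma ipBl u v w : ip (u - v) w = ip u w - ip v w.
Proof. by rewrite ipDl ipNl. Qed.

Lemma ipNr u v : ip u (- v) = - ip u v.
Proof. by rewrite -scaleN1r ipZr mulN1r. Qed.

Lemma ipBr u v w : ip u (v - w) = ip u v - ip u w.
Proof. by rewrite ipDr ipNr. Qed.

Lemma ip_sumr (I : Type) (r : seq I) (P : pred I) (F : I -> V) u :
  ip u (\sum_(i <- r | P i) F i) = \sum_(i <- r | P i) ip u (F i).
Proof.
elim/big_rec2: _ => [|i y1 y2 _ IH]; first exact: ip0r.
by rewrite ipDr IH.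
Qed.

Lemma ip_suml (I : Type) (r : seq I) (P : pred I) (F : I -> V) u :
  ip (\sum_(i <- r | P i) F i) u = \sum_(i <- r | P i) ip (F i) u.
Proof.
elim/big_rec2: _ => [|i y1 y2 _ IH]; first exact: ip0l.
by rewrite ipDl IH.
Qed.

Lemma ip_suml_ord n (F : 'I_n -> V) u :
  ip (\sum_(i < n) F i) u = \sum_(i < n) ip (F i) u.
Proof. exact: ip_suml. Qed.

Lemma ip_sumr_ord n (F : 'I_n -> V) u :
  ip u (\sum_(i < n) F i) = \sum_(i < n) ip u (F i).
Proof. exact: ip_sumr. Qed.

Lemma ip_def u : ip u u = 0 -> u = 0.
Proof. by case: hH => _ _ _ h _; apply: h. Qed.

Lemma ip_ge0 u : 0 <= ip u u.
Proof. by case: hH => _ _ h _ _; apply: h. Qed.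

Lemma ip_zero (D : V -> Prop) z : is_dense ip D ->
  (forall v, D v -> ip z v = 0) -> z = 0.
Proof.
move=> dD hz; apply: ip_def; apply/eqP; apply: contraT => nz.
have zz := ip_ge0 z.
have Imz : complex.Im (ip z z) = 0 by apply: ger0_Im.
set p := complex.Re (ip z z).
have p0 : 0 < p.
  move: zz; rewrite lecE => /andP [_ pge]; rewrite lt_def pge andbT.
  apply: contraNneq nz => p0; apply/eqP; rewrite [ip z z]complexE -/p p0 Imz.
  by rewrite mulr0 addr0.
have [d [Dd dd]] := dD z p p0.
move: dd; rewrite /dist2 ipBl !ipBr (hz d Dd) (ipC z d) (hz d Dd) rmorph0 !subr0 sub0r opprK.
rewrite raddfD /= -/p => h.
have := ip_ge0 d; rewrite lecE => /andP [_ /= h2].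
by move: h; rewrite ltNge lerDl h2.
Qed.
End Hilb.

Lemma Lam0 (R : realType) (A : 'M[R[i]]_2) : Lam A 0 = 0.
Proof.
have h0 : herm_of (0 : mink R) = 0.
  apply/matrixP => i j; rewrite !mxE /=.
  by case: ifP => _; [|case: ifP => _; [|case: ifP => _]]; rewrite ?addr0 ?subr0 ?oppr0.
rewrite /Lam h0 mulmx0 mul0mx; apply/rowP => k; rewrite !mxE /=.
by case: ifP => _; [|case: ifP => _; [|case: ifP => _]]; rewrite ?addr0 ?subr0 ?mul0r.
Qed.

Unset Implicit Arguments.
Local Open Scope complex_scope.

Theorem theorem3 (R : realType) (V : lmodType R[i]) (ip : V -> V -> R[i])
  (D : V -> Prop)
  (U : mink R -> 'M[R[i]]_2 -> V -> V)
  (n : nat) (S : 'M[R[i]]_2 -> 'M[R[i]]_n)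
  (psi : 'I_n -> mink R -> V -> V)
  (Omega : V) :
  hilbert_ip ip ->
  is_subspace D -> is_dense ip D ->
  (* U is a unitary representation of R^4 x| SL(2,C) *)
  (forall a A, SL2 A -> unitary_op ip (U a A)) ->
  (forall v, U 0 1%:M v = v) ->
  (forall a A b B, SL2 A -> SL2 B -> forall v,
      U a A (U b B v) = U (a + Lam A b) (A *m B) v) ->
  (* S : SL(2,C) -> GL(C^n) multiplicity-free, no trivial sub-representations *)
  is_rep S -> multfree_notrivial S ->
  (* psi_alpha(x) in L(D, H) *)
  (forall alpha x, linear_on D (psi alpha x)) ->
  (* (1) *)
  (forall a A, SL2 A ->
      (forall v, D v -> D (U a A v)) /\
      adjoint_preserves ip (fun=> True) (U a A) D) ->
  (* (2) *)
  (forall alpha x,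
      (forall v, D v -> D (psi alpha x v)) /\
      adjoint_preserves ip D (psi alpha x) D) ->
  (* (3) covariance on D *)
  (forall a A, SL2 A -> forall x alpha v, D v ->
      forall u, adjoint_at ip (fun=> True) (U a A) v u ->
      U a A (psi alpha x u) =
        \sum_(beta < n) (S (invmx A)) alpha beta *: psi beta (Lam A x + a) v) ->
  (* (4) invariant nonzero vacuum *)
  D Omega -> Omega != 0 -> (forall a A, SL2 A -> U a A Omega = Omega) ->
  forall alpha x,
    psi alpha x Omega = 0 /\
    (forall u, adjoint_at ip D (psi alpha x) Omega u -> u = 0).
Proof.
move=> hH hDs dD Uu U1 Ucomp rS mf psilin h1 h2 cov DO O0 UO.
have Uip : forall a A, SL2 A -> forall u v, ip (U a A u) (U a A v) = ip u v.
  by move=> a A sA; case: (Uu a A sA).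
have U0 : forall a A, SL2 A -> U a A 0 = 0.
  move=> a A sA; case: (Uu a A sA) => lin _ _.
  have h := lin 1 0 0; rewrite !scale1r addr0 in h.
  have := congr1 (fun x => x - U a A 0) h; rewrite /= subrr addrK.
  by move/esym.
have ipOU : forall a A, SL2 A -> forall y, ip Omega (U a A y) = ip Omega y.
  by move=> a A sA y; rewrite -[in LHS](UO a A sA) Uip.
have UadjO : forall a A, SL2 A -> adjoint_at ip (fun=> True) (U a A) Omega Omega.
  by move=> a A sA y _; rewrite ipOU.
have adjU : forall a A, SL2 A -> forall w u,
    adjoint_at ip (fun=> True) (U a A) w u -> U a A u = w.
  move=> a A sA w u hu; case: (Uu a A sA) => _ _ surj; have [u0 hu0] := surj w.
  suff -> : u = u0 by [].
  apply/eqP; rewrite -subr_eq0; apply/eqP; apply: (ip_def hH).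
  by rewrite {1}(ipBl hH) (hu _ I) -hu0 Uip // subrr.
have S1 : S 1%:M = 1%:M by case: rS.
have SL1 : SL2 (1%:M : 'M[R[i]]_2) by rewrite /SL2 det1.
have sum1 : forall (f : 'I_n -> V) al,
    \sum_(beta < n) (S (invmx 1%:M)) al beta *: f beta = f al.
  move=> f al; rewrite invmx1 S1 (bigD1 al) //= big1 ?addr0.
    by rewrite mxE eqxx mulr1n scale1r.
  by move=> b bal; rewrite mxE eq_sym (negbTE bal) mulr0n scale0r.
have trans : forall al x v u, D v -> adjoint_at ip (fun=> True) (U x 1%:M) v u ->
    U x 1%:M (psi al 0 u) = psi al x v.
  by move=> al x v u Dv hu; rewrite (cov x 1%:M SL1 0 al v Dv u hu) sum1 Lam0 add0r.
have lor : forall A al v u, SL2 A -> D v -> adjoint_at ip (fun=> True) (U 0 A) v u ->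
    U 0 A (psi al 0 u) = \sum_(beta < n) S (invmx A) al beta *: psi beta 0 v.
  by move=> A al v u sA Dv hu; rewrite (cov 0 A sA 0 al v Dv u hu) Lam0 addr0.
set f := fun al => psi al 0 Omega.
have fL : forall A, SL2 A -> forall al,
    U 0 A (f al) = \sum_(b < n) S (invmx A) al b *: f b.
  by move=> A sA al; exact: (lor A al Omega Omega sA DO (UadjO 0 A sA)).
set H1 : 'M[R[i]]_n := \matrix_(a < n, b < n) ip (f b) (f a).
have H1z : H1 = 0.
  apply: (core rS) => //.
  - by apply/matrixP => a b; rewrite ctE !mxE -(ipC hH).
  - move=> c; suff -> : (c *m H1 *m ct c) 0 0
        = ip (\sum_(g < n) c 0 g *: f g) (\sum_(d < n) c 0 d *: f d) by apply: ip_ge0.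
    rewrite !mxE (ip_suml hH); apply: eq_bigr => g _.
    rewrite (ipZl hH) (ip_sumr hH) mxE mulrC !mulr_sumr ctE; apply: eq_bigr => d _.
    by rewrite !mxE (ipZr hH); ring.
  - move=> A sA; apply/matrixP => a b.
    rewrite [RHS]mxE -(Uip 0 A sA) !(fL A sA); rewrite (ip_suml hH) !mxE; apply: eq_bigr => g _.
    rewrite (ipZl hH) (ip_sumr hH) ctE ?mxE mulrC !mulr_sumr; apply: eq_bigr => d _.
    by rewrite !mxE (ipZr hH); ring.
have f0 : forall al, f al = 0.
  move=> al; apply: (ip_def hH).
  by have := congr1 (fun M : 'M[R[i]]_n => M al al) H1z; rewrite !mxE.
have /fin_all_exists [w wP] : forall al : 'I_n, exists u,
    D u /\ adjoint_at ip D (psi al 0) Omega u.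
  by move=> al; apply: (h2 al 0).2 Omega DO.
have wL : forall A, SL2 A -> forall al,
    U 0 A (w al) = \sum_(g < n) Num.conj (S (invmx A) al g) *: w g.
  move=> A sA al.
  apply/eqP; rewrite -subr_eq0; apply/eqP; apply: (ip_zero hH dD) => v Dv.
  have [u' [Du' hu']] := (h1 0 A sA).2 v Dv.
  have Uu' := adjU 0 A sA v u' hu'.
  rewrite (ipBl hH) -{1}Uu' Uip // ((wP al).2 u' Du') -(ipOU 0 A sA).
  rewrite (lor A al v u' sA Dv hu') (ip_sumr hH) (ip_suml hH).
  apply/eqP; rewrite subr_eq0; apply/eqP; apply: eq_bigr => g _.
  by rewrite (ipZr hH) (ipZl hH) conjCK ((wP g).2 v Dv).
set H2 : 'M[R[i]]_n := \matrix_(a < n, b < n) ip (w a) (w b).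
have H2z : H2 = 0.
  apply: (core rS) => //.
  - by apply/matrixP => a b; rewrite ctE !mxE -(ipC hH).
  - move=> c; suff -> : (c *m H2 *m ct c) 0 0
        = ip (\sum_(d < n) Num.conj (c 0 d) *: w d) (\sum_(g < n) Num.conj (c 0 g) *: w g).
      by apply: ip_ge0.
    transitivity (\sum_(g < n) \sum_(d < n) c 0 d * ip (w d) (w g) * Num.conj (c 0 g)).
      rewrite mxE; apply: eq_bigr => g _; rewrite mxE mulr_suml ctE; apply: eq_bigr => d _.
      by rewrite mxE.
    rewrite exchange_big /= (ip_suml hH); apply: eq_bigr => d _.
    rewrite (ipZl hH) (ip_sumr hH) mulr_sumr conjCK; apply: eq_bigr => g _.
    by rewrite (ipZr hH); ring.
  - move=> A sA; apply/matrixP => a b.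
    rewrite [RHS]mxE -(Uip 0 A sA) !(wL A sA).
    transitivity (\sum_(g < n) \sum_(d < n) S (invmx A) a d * ip (w d) (w g)
                     * Num.conj (S (invmx A) b g)).
      rewrite mxE; apply: eq_bigr => g _; rewrite mxE mulr_suml ctE; apply: eq_bigr => d _.
      by rewrite mxE.
    rewrite exchange_big /= (ip_suml hH); apply: eq_bigr => d _.
    rewrite (ipZl hH) (ip_sumr hH) mulr_sumr conjCK; apply: eq_bigr => g _.
    by rewrite (ipZr hH); ring.
have w0 : forall al, w al = 0.
  move=> al; apply: (ip_def hH).
  by have := congr1 (fun M : 'M[R[i]]_n => M al al) H2z; rewrite !mxE.
move=> al x; split.
  by rewrite -(trans al x Omega Omega DO (UadjO x 1%:M SL1)) -/(f al) f0 U0.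
move=> u hu; apply: (ip_zero hH dD) => v Dv.
rewrite (hu v Dv).
have [u' [Du' hu']] := (h1 x 1%:M SL1).2 v Dv.
by rewrite -(trans al x v u' Dv hu') ipOU // -((wP al).2 u' Du') w0 (ip0l hH).
Qed.
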